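(* Let $\Pi$ be an equitative protocol for a distribution type $\tau$. Then for every run $\rho$ of $\Pi$, every card $c\in\Omega$ and every agent $P\in\mathcal A$, \[\Pr(c\in H_P\mid\rho)=\frac{|\mathrm{Poss}_{c,P}(\rho)|}{|\mathrm{Poss}(\rho)|}.\]
   Context: Let $\mathcal A$ be a finite set of agents listed in speaking order $P_0,\dots,P_m$. A distribution type is a vector $\tau=(\tau_P)_{P\in\mathcal A}$ of positive integers, $|\tau|=\sum_P\tau_P$. The deck $\Omega$ is a set of $|\tau|$ cards; a deal of type $\tau$ is a partition $H=(H_P)_P$ of $\Omega$ with $|H_P|=\tau_P$. Fix a set of tokens; a run is a finite sequence $\rho=a_0,\dots,a_n$ of tokens, $\rho_{<k}=a_0,\dots,a_{k-1}$. A protocol for $\tau$ is a function $\Pi$ assigning to every deal $H$ and run $\rho$ a set of tokens $\Pi(H,\rho)$ such that if $k$ is the remainder of $|\rho|$ modulo $m+1$ and $H_{P_k}=H'_{P_k}$, then $\Pi(H,\rho)=\Pi(H',\rho)$. An execution is a pair $(H,\rho)$ with $a_k\in\Pi(H,\rho_{<k})$ for all $k\le n$; $\rho$ is a run of $\Pi$ if some $(H,\rho)$ is an execution. $\mathrm{Poss}(\rho)$ is the set of deals $H$ with $(H,\rho)$ an execution, and $\mathrm{Poss}_{c,P}(\rho)$ the set of $H\in\mathrm{Poss}(\rho)$ with $c\in H_P$. $\Pi$ is equitative if for every run $\rho$ of $\Pi$ there is $k=k(\rho)$ with $|\Pi(H,\rho)|=k$ for all $H\in\mathrm{Poss}(\rho)$.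 Probability model: a deal $H$ is drawn uniformly at random among all deals of type $\tau$; then, starting from the empty run, while $\Pi(H,\rho)\ne\emptyset$ for the current run $\rho$, a token is drawn uniformly at random from $\Pi(H,\rho)$ and appended. The event ''$\rho$'' is that the first $|\rho|$ tokens produced are exactly $\rho$. *)

(* Defs.v *)
From HB Require Import structures.
From mathcomp Require Import all_boot all_order all_algebra finmap.
Set Implicit Arguments. Unset Strict Implicit. Unset Printing Implicit Defensive.
Import Order.TTheory GRing.Theory Num.Theory.

(* Agents are P_0,...,P_m, represented by 'I_m.+1 (index = speaking order).
   The deck Omega is a finType; tokens live in a choiceType T.
   A "deal candidate" is a family of hands indexed by agents. *)
Definition handsT (m : nat) (Omega : finType) := {ffun 'I_m.+1 -> {set Omega}}.

Definition is_deal (m : nat) (Omega : finType) (tau : 'I_m.+1 -> nat)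
    (H : handsT m Omega) : bool :=
  [forall c : Omega, #|[set P | c \in H P]| == 1] &&
  [forall P, #|H P| == tau P].

Definition protocolT (m : nat) (Omega : finType) (T : choiceType) :=
  handsT m Omega -> seq T -> {fset T}.

(* The protocol condition: the set of allowed tokens depends only on the hand
   of the agent P_k whose turn it is, k = |rho| mod (m+1). *)
Definition is_protocol (m : nat) (Omega : finType) (T : choiceType)
    (tau : 'I_m.+1 -> nat) (Pi : protocolT m Omega T) : Prop :=
  forall (H H' : handsT m Omega) (rho : seq T) (k : 'I_m.+1),
    is_deal tau H -> is_deal tau H' ->
    nat_of_ord k = size rho %% m.+1 -> H k = H' k -> Pi H rho = Pi H' rho.

Definition execution (m : nat) (Omega : finType) (T : choiceType)
    (tau : 'I_m.+1 -> nat) (Pi : protocolT m Omega T)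
    (H : handsT m Omega) (rho : seq T) : bool :=
  is_deal tau H &&
  [forall k : 'I_(size rho), tnth (in_tuple rho) k \in Pi H (take k rho)].

Definition is_run (m : nat) (Omega : finType) (T : choiceType)
    (tau : 'I_m.+1 -> nat) (Pi : protocolT m Omega T) (rho : seq T) : Prop :=
  exists H, execution tau Pi H rho.

Definition Poss (m : nat) (Omega : finType) (T : choiceType)
    (tau : 'I_m.+1 -> nat) (Pi : protocolT m Omega T) (rho : seq T)
    : {set handsT m Omega} :=
  [set H | execution tau Pi H rho].

Definition PossCP (m : nat) (Omega : finType) (T : choiceType)
    (tau : 'I_m.+1 -> nat) (Pi : protocolT m Omega T) (rho : seq T)
    (c : Omega) (P : 'I_m.+1) : {set handsT m Omega} :=
  [set H in Poss tau Pi rho | c \in H P].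

Definition equitative (m : nat) (Omega : finType) (T : choiceType)
    (tau : 'I_m.+1 -> nat) (Pi : protocolT m Omega T) : Prop :=
  forall rho : seq T, is_run tau Pi rho ->
  exists k : nat, forall H, H \in Poss tau Pi rho -> #|` Pi H rho| = k.

Local Open Scope ring_scope.

(* Probability model: H uniform among deals of type tau; then tokens drawn
   uniformly from Pi(H, current run) while nonempty.
   probJoint H rho = Pr(deal = H and the first |rho| tokens are rho). *)
Definition probJoint (R : realFieldType) (m : nat) (Omega : finType)
    (T : choiceType) (tau : 'I_m.+1 -> nat) (Pi : protocolT m Omega T)
    (H : handsT m Omega) (rho : seq T) : R :=
  if is_deal tau H then
    (#|[set H' : handsT m Omega | is_deal tau H']|%:R)^-1 *
    \prod_(k < size rho)
      (if tnth (in_tuple rho) k \in Pi H (take k rho) then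
         (#|` Pi H (take k rho)|%:R)^-1 else 0)
  else 0.

Definition probRun (R : realFieldType) (m : nat) (Omega : finType)
    (T : choiceType) (tau : 'I_m.+1 -> nat) (Pi : protocolT m Omega T)
    (rho : seq T) : R :=
  \sum_(H : handsT m Omega) probJoint R tau Pi H rho.

Definition probCardGivenRun (R : realFieldType) (m : nat) (Omega : finType)
    (T : choiceType) (tau : 'I_m.+1 -> nat) (Pi : protocolT m Omega T)
    (rho : seq T) (c : Omega) (P : 'I_m.+1) : R :=
  (\sum_(H : handsT m Omega | c \in H P) probJoint R tau Pi H rho)
  / probRun R tau Pi rho.

(* Main.v *)
Require Import Defs.
From HB Require Import structures.
From mathcomp Require Import all_boot all_order all_algebra finmap.
From mathcomp Require Import zify.
Import GRing.Theory Num.Theory.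
Local Open Scope ring_scope.

Lemma exec_take (m : nat) (Omega : finType) (T : choiceType)
    (tau : 'I_m.+1 -> nat) (Pi : protocolT m Omega T) H rho (i : nat) :
  execution tau Pi H rho -> execution tau Pi H (take i rho).
Proof.
move=> /andP[dH /forallP ex]; apply/andP; split => //.
apply/forallP => j.
have [jlt ji] : (j < size rho)%N /\ (j < i)%N.
  have := ltn_ord j; move: (nat_of_ord j) => jn; rewrite size_take; case: ifP => h hj; lia.
have := ex (Ordinal jlt).
pose x0 := tnth (in_tuple rho) (Ordinal jlt).
rewrite (tnth_nth x0) /= => h.
rewrite (tnth_nth x0) /= nth_take // take_takel //; exact: ltnW.
Qed.

Lemma probJoint_eq (R : realFieldType) (m : nat) (Omega : finType)
    (T : choiceType) (tau : 'I_m.+1 -> nat) (Pi : protocolT m Omega T) rho H H0 :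
  equitative tau Pi ->
  H \in Poss tau Pi rho -> H0 \in Poss tau Pi rho ->
  probJoint R tau Pi H rho = probJoint R tau Pi H0 rho.
Proof.
move=> eqt; rewrite !inE => eH eH0.
rewrite /probJoint.
move: (eH) (eH0) => /andP[-> /forallP fH] /andP[-> /forallP fH0].
congr (_ * _); apply: eq_bigr => i _.
rewrite fH fH0.
have hr : is_run tau Pi (take i rho) by exists H; apply: exec_take.
have [kk Hk] := eqt _ hr.
rewrite (Hk H) ?(Hk H0) // inE; exact: exec_take.
Qed.

Lemma probJoint_nposs (R : realFieldType) (m : nat) (Omega : finType)
    (T : choiceType) (tau : 'I_m.+1 -> nat) (Pi : protocolT m Omega T) rho H :
  H \notin Poss tau Pi rho -> probJoint R tau Pi H rho = 0.
Proof.
rewrite inE /execution /probJoint negb_and; case: ifP => //= _.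
move=> /forallPn [k hk]; rewrite (bigD1 k) //= (negbTE hk) mul0r mulr0 //.
Qed.

Lemma probJoint_neq0 (R : realFieldType) (m : nat) (Omega : finType)
    (T : choiceType) (tau : 'I_m.+1 -> nat) (Pi : protocolT m Omega T) rho H :
  H \in Poss tau Pi rho -> probJoint R tau Pi H rho != 0.
Proof.
rewrite inE => /andP[dH /forallP fH].
rewrite /probJoint dH mulf_neq0 //.
  apply: invr_neq0; rewrite pnatr_eq0 -lt0n; apply/card_gt0P; exists H; by rewrite inE.
apply/prodf_neq0 => i _; rewrite fH; apply: invr_neq0; rewrite pnatr_eq0 -lt0n cardfs_gt0.
apply/fset0Pn; exists (tnth (in_tuple rho) i); exact: fH.
Qed.

Lemma ratio (R : realFieldType) (I : finType) (A B : {set I}) (K : R) :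
  K != 0 -> (\sum_(i in A) K) / (\sum_(i in B) K) = #|A|%:R / #|B|%:R.
Proof.
move=> K0; rewrite !sumr_const -[K *+ #|A|]mulr_natl -[K *+ #|B|]mulr_natl.
by rewrite invfM mulrACA divff // mulr1.
Qed.

Theorem mainTheorem4 (R : realFieldType) (m : nat) (Omega : finType)
    (T : choiceType) (tau : 'I_m.+1 -> nat) (Pi : protocolT m Omega T) :
  (forall P, (0 < tau P)%N) ->
  #|Omega| = (\sum_(P < m.+1) tau P)%N ->
  is_protocol tau Pi ->
  equitative tau Pi ->
  forall (rho : seq T) (c : Omega) (P : 'I_m.+1),
    is_run tau Pi rho ->
    probCardGivenRun R tau Pi rho c P =
      #|PossCP tau Pi rho c P|%:R / #|Poss tau Pi rho|%:R.
Proof.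
move=> _ _ _ eqt rho c P [H0 eH0].
have H0P : H0 \in Poss tau Pi rho by rewrite inE.
set K := probJoint R tau Pi H0 rho.
have hK : forall H, probJoint R tau Pi H rho =
    if H \in Poss tau Pi rho then K else 0.
  move=> H; case: ifP => hH; first exact: probJoint_eq.
  by apply: probJoint_nposs; rewrite hH.
have K0 : K != 0 by apply: probJoint_neq0.
have S1 : \sum_(H : handsT m Omega | c \in H P) probJoint R tau Pi H rho
    = \sum_(H in PossCP tau Pi rho c P) K.
  rewrite big_mkcond [RHS]big_mkcond; apply: eq_bigr => H _.
  rewrite hK /PossCP in_set.
  case: (c \in H P); rewrite ?andbT ?andbF; reflexivity.
have S2 : \sum_(H : handsT m Omega) probJoint R tau Pi H rho
    = \sum_(H in Poss tau Pi rho) K.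
  rewrite [RHS]big_mkcond; apply: eq_bigr => H _; apply: hK.
rewrite /probCardGivenRun /probRun.
transitivity ((\sum_(H in PossCP tau Pi rho c P) K) / (\sum_(H in Poss tau Pi rho) K)).
  congr (_ / _); [exact: S1 | exact: S2].
apply: ratio; exact: K0.
Qed.
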